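(* Let $P$ be the Borel probability measure on $\mathbb{R}$ with density $f(x)=\frac32$ if $x\in J_1:=[0,\frac13]$, $f(x)=\frac94$ if $x\in J_2\cup J_3$ where $J_2:=[\frac23,\frac79]$ and $J_3:=[\frac89,1]$, and $f(x)=0$ otherwise. Let $\alpha=\{a_1,a_2,a_3,a_4\}$ be an optimal set of four-means for $P$ with $a_1<a_2<a_3<a_4$. Then $a_1=\frac1{12}$, $a_2=\frac14$, $a_3=\frac{13}{18}$, $a_4=\frac{17}{18}$, and the corresponding quantization error is $V_4=\frac{13}{7776}$.
   Context: For $n\in\mathbb{N}$, the $n$th quantization error of $P$ is $V_n=\inf\{\int\min_{a\in\alpha}(x-a)^2\,dP(x):\alpha\subset\mathbb{R},\ \mathrm{card}(\alpha)\le n\}$, and an optimal set of $n$-means is a set $\alpha$ with $\mathrm{card}(\alpha)\le n$ attaining this infimum. *)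

(* Defs.v *)
From HB Require Import structures.
From mathcomp Require Import all_boot all_order all_algebra finmap.
From mathcomp Require Import all_classical all_reals all_analysis.
Set Implicit Arguments. Unset Strict Implicit. Unset Printing Implicit Defensive.
Import Order.TTheory GRing.Theory Num.Theory.
Local Open Scope classical_set_scope.
Local Open Scope ring_scope.
Local Open Scope fset_scope.

Definition dens (R : realType) (x : R) : R :=
  if (0 <= x <= 3^-1) then 3 / 2
  else if (2 / 3 <= x <= 7 / 9) || (8 / 9 <= x <= 1) then 9 / 4
  else 0.

Definition mindist (R : realType) (alpha : {fset R}) (x : R) : \bar R :=
  \big[Order.min/+oo%E]_(a <- alpha) ((x - a) ^+ 2)%:E.

Definition distortion (R : realType) (alpha : {fset R}) : \bar R :=
  (\int[@lebesgue_measure R]_(x in [set: R]) ((dens x)%:E * mindist alpha x))%E.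

Definition quant_err (R : realType) (n : nat) : \bar R :=
  ereal_inf [set distortion alpha | alpha in [set alpha : {fset R} | (#|` alpha| <= n)%N]].

Definition optimal_set (R : realType) (n : nat) (alpha : {fset R}) : Prop :=
  (#|` alpha| <= n)%N /\ distortion alpha = quant_err R n.

(* Main.v *)
Require Import Defs.
From HB Require Import structures.
From mathcomp Require Import all_boot all_order all_algebra finmap.
From mathcomp Require Import all_classical all_reals all_analysis.
From mathcomp Require Import measurable_realfun lra ring zify.
Import Order.TTheory GRing.Theory Num.Theory.
Import numFieldNormedType.Exports.
Local Open Scope classical_set_scope.
Local Open Scope ring_scope.

Section Main.
Variable R : realType.
Local Open Scope fset_scope.


Definition m4 (a1 a2 a3 a4 x : R) : R :=
  Num.min (Num.min (Num.min ((x - a1) ^+ 2) ((x - a2) ^+ 2)) ((x - a3) ^+ 2)) ((x - a4) ^+ 2).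

Lemma bigmin_ge (s : seq R) (F : R -> \bar R) (y : \bar R) :
  (forall a, a \in s -> (y <= F a)%E) -> (y <= \big[Order.min/+oo%E]_(a <- s) F a)%E.
Proof.
elim: s => [|h t IH] H; first by rewrite big_nil leey.
rewrite big_cons le_min H ?mem_head //= IH // => a ha.
by apply: H; rewrite in_cons ha orbT.
Qed.

Lemma bigmin_le (s : seq R) (F : R -> \bar R) (a : R) :
  a \in s -> (\big[Order.min/+oo%E]_(b <- s) F b <= F a)%E.
Proof.
elim: s => [|h t IH] //; rewrite in_cons big_cons => /orP[/eqP->|ha].
  by rewrite ge_min lexx.
by rewrite ge_min IH ?orbT.
Qed.

Lemma mindist_m4 (a1 a2 a3 a4 x : R) :
  mindist [fset a1; a2; a3; a4] x = (m4 a1 a2 a3 a4 x)%:E.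
Proof.
rewrite /mindist; apply/eqP; rewrite eq_le; apply/andP; split.
  rewrite /m4 !EFin_min !le_min.
  by rewrite !bigmin_le // !inE eqxx ?orbT.
apply: bigmin_ge => a; rewrite !inE -!orbA => /or4P[] /eqP ->; rewrite lee_fin /m4 !ge_min lexx ?orbT //.
Qed.
Local Close Scope fset_scope.
Local Notation mu := (@lebesgue_measure R).

Lemma cont_of_der (F : R -> R) (f : R -> R) : (forall x : R, is_derive x (1:R) F (f x)) -> continuous F.
Proof.
move=> H x; apply/differentiable_continuous; rewrite -derivable1_diffP.
have := H x; case => ? _; done.
Qed.

Lemma ftc_gen (F f f' : R -> R) a b : a < b ->
  (forall x : R, is_derive x (1:R) F (f x)) -> (forall x : R, is_derive x (1:R) f (f' x)) ->
  (\int[mu]_(x in `[a, b]) (f x)%:E = (F b - F a)%:E)%E.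
Proof.
move=> ab HF Hf; rewrite (@continuous_FTC2 _ f F) //.
- by apply/continuous_subspaceT => x; exact: cont_of_der Hf x.
- split.
  + by move=> x _; have := HF x; case => ? _; done.
  + by apply: cvg_at_right_filter; exact: cont_of_der HF a.
  + by apply: cvg_at_left_filter; exact: cont_of_der HF b.
- by move=> x _; rewrite derive1E derive_val.
Qed.

Lemma deriv_cube (c x : R) : is_derive x 1 (fun y : R => (y - c) ^+ 3 / 3) ((x - c) ^+ 2).
Proof.
have h1 : is_derive x (1:R) (fun y : R => y - c) (1 - 0).
  exact: (@is_deriveB _ _ _ id (cst c) x 1 1 0).
have h3 := is_deriveX 3 h1.
have h4 := is_deriveM h3 (is_derive_cst (3^-1 : R) x 1).
apply: (is_derive_eq h4).
rewrite /= scaler0 add0r /GRing.scale /= subr0 mulr1.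
by rewrite mulrA mulVf ?mul1r // pnatr_eq0.
Qed.

Lemma deriv_sq (c x : R) : is_derive x 1 (fun y : R => (y - c) ^+ 2) (2 * (x - c)).
Proof.
have h1 : is_derive x (1:R) (fun y : R => y - c) (1 - 0).
  exact: (@is_deriveB _ _ _ id (cst c) x 1 1 0).
have h3 := is_deriveX 2 h1.
apply: (is_derive_eq h3).
by rewrite /= subr0 /GRing.scale /= mulr1 expr1.
Qed.

Lemma int_sq (a b c : R) : a <= b ->
  (\int[mu]_(x in `[a, b]) ((x - c) ^+ 2)%:E = (((b - c) ^+ 3 - (a - c) ^+ 3) / 3)%:E)%E.
Proof.
rewrite le_eqVlt => /predU1P[<-|ab].
  by rewrite set_itv1 integral_set1 subrr mul0r.
rewrite (@ftc_gen _ _ _ _ _ ab (fun x => deriv_cube c x) (fun x => deriv_sq c x)).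
by rewrite mulrBl.
Qed.
Local Open Scope ereal_scope.
Lemma split_int (g : R -> R) (u w v : R) : measurable_fun setT g -> (forall x, (0 <= g x)%R) ->
  (u <= w)%R -> (w <= v)%R ->
  \int[mu]_(x in `[u, v]) (g x)%:E = \int[mu]_(x in `[u, w]) (g x)%:E + \int[mu]_(x in `[w, v]) (g x)%:E.
Proof.
move=> mg g0 uw wv.
have mG : measurable_fun setT (EFin \o g) by exact: measurableT_comp.
rewrite (@itv_bndbnd_setU _ _ _ (BRight w)) ?bnd_simp //.
rewrite ge0_integral_setU //=.
- by rewrite integral_itv_obnd_cbnd //; exact: measurable_funS mG.
- exact: measurable_funS mG.
- by move=> x _; rewrite lee_fin.
- rewrite disj_set2E; apply/eqP/seteqP; split => // x [] /=.
  rewrite !in_itv /= => /andP[_ h1] /andP[h2 _].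
  by move: (lt_le_trans h2 h1); rewrite ltxx.
Qed.

Lemma lower_int (g : R -> R) (u v c : R) : measurable_fun setT g -> (u <= v)%R ->
  (forall x, (u <= x <= v)%R -> ((x - c) ^+ 2 <= g x)%R) ->
  ((((v - c) ^+ 3 - (u - c) ^+ 3) / 3)%:E <= \int[mu]_(x in `[u, v]) (g x)%:E).
Proof.
move=> mg uv H; rewrite -int_sq //.
apply: ge0_le_integral => //.
- by move=> x _; rewrite lee_fin sqr_ge0.
- apply: measurableT_comp => //; apply: measurable_funX; apply: measurable_funB => //.
- by apply: (measurable_funS measurableT) => //; exact: measurableT_comp.
Qed.

Local Close Scope ereal_scope.


Lemma dens_J1 (x : R) : 0 <= x <= 1/3 -> dens x = 3/2.
Proof. by rewrite /dens div1r => ->. Qed.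

Lemma dens_J2 (x : R) : 2/3 <= x <= 7/9 -> dens x = 9/4.
Proof.
move=> /andP[h1 h2]; rewrite /dens ifF; last first.
  apply/negbTE/negP => /andP[_ h3]; lra.
by rewrite h1 h2.
Qed.

Lemma dens_J3 (x : R) : 8/9 <= x <= 1 -> dens x = 9/4.
Proof.
move=> /andP[h1 h2]; rewrite /dens ifF; last first.
  apply/negbTE/negP => /andP[_ h3]; lra.
by rewrite h1 h2 orbT.
Qed.

Lemma dens_out (x : R) : ~~ (0 <= x <= 1/3) -> ~~ (2/3 <= x <= 7/9) -> ~~ (8/9 <= x <= 1) -> dens x = 0.
Proof.
move=> h1 h2 h3; rewrite /dens; case: ifP => [H|_]; first by rewrite div1r H in h1.
by case: ifP => // /orP[H|H]; [rewrite H in h2 | rewrite H in h3].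
Qed.

Local Open Scope ereal_scope.

Definition Iv (u v : R) (g : R -> R) := \int[mu]_(x in `[u, v]) (g x)%:E.

Lemma decomp (g : R -> R) : measurable_fun setT g -> (forall x, (0 <= g x)%R) ->
  \int[mu]_(x in [set: R]) ((dens x)%:E * (g x)%:E) =
  (3/2)%:E * Iv 0 (1/3) g + (9/4)%:E * Iv (2/3) (7/9) g + (9/4)%:E * Iv (8/9) 1 g.
Proof.
move=> mg g0.
set h := fun x => (dens x)%:E * (g x)%:E.
pose A : set R := `[0%R, (1/3)%R]%classic; pose B : set R := `[(2/3)%R, (7/9)%R]%classic; pose C : set R := `[(8/9)%R, 1%R]%classic.
have mG : measurable_fun setT (EFin \o g) by exact: measurableT_comp.
have mk (k : R) (D : set R) (Dk : forall x, D x -> dens x = k) : measurable_fun D h.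
  apply: (@eq_measurable_fun _ _ _ _ D (fun x => k%:E * (g x)%:E)).
    by move=> x; rewrite inE => /Dk; rewrite /h => ->.
  apply: measurable_funeM; exact: (measurable_funS measurableT).
have DA : forall x, A x -> dens x = (3/2)%R by move=> x; rewrite /A /= in_itv /=; exact: dens_J1.
have DB : forall x, B x -> dens x = (9/4)%R by move=> x; rewrite /B /= in_itv /=; exact: dens_J2.
have DC : forall x, C x -> dens x = (9/4)%R by move=> x; rewrite /C /= in_itv /=; exact: dens_J3.
have h0 : forall x, 0 <= h x.
  move=> x; rewrite /h /dens; apply: mule_ge0; rewrite lee_fin ?g0 //.
  by repeat case: ifP => _ //.
have -> : \int[mu]_(x in [set: R]) h x = \int[mu]_(x in A `|` B `|` C) h x.
  rewrite [RHS]integral_mkcond; apply: eq_integral => x _; rewrite /patch.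
  case: ifPn => // /negP hx.
  rewrite /h dens_out ?mul0e //; apply/negP => hh; apply: hx; rewrite inE.
  - by left; left; rewrite /A /= in_itv.
  - by left; right; rewrite /B /= in_itv.
  - by right; rewrite /C /= in_itv.
have dAB : [disjoint A & B].
  rewrite disj_set2E; apply/eqP/seteqP; split => // x [] /=.
  move=> hA hB; move: hA hB; rewrite /A /B /= !in_itv /= => /andP[_ h1] /andP[h2 _]; lra.
have dABC : [disjoint A `|` B & C].
  rewrite disj_set2E; apply/eqP/seteqP; split => // x [] /=.
  move=> hA hB; move: hA hB; rewrite /A /B /C /= !in_itv /= => -[] /andP[_ h1] /andP[h2 _]; lra.
have mA : measurable A by exact: measurable_itv.
have mB : measurable B by exact: measurable_itv.
have mC : measurable C by exact: measurable_itv.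
have mAB : measurable (A `|` B) by exact: measurableU.
rewrite ge0_integral_setU //; last first.
  apply/(measurable_funU _ mAB mC); split; [apply/(measurable_funU _ mA mB); split|].
  exact: (mk _ _ DA). exact: (mk _ _ DB). exact: (mk _ _ DC).
rewrite ge0_integral_setU //; last first.
  by apply/(measurable_funU _ mA mB); split; [exact: (mk _ _ DA)|exact: (mk _ _ DB)].
have E (k : R) (D : set R) (u v : R) : D = `[u, v]%classic -> (0 <= k)%R -> (forall x, D x -> dens x = k) ->
    \int[mu]_(x in D) h x = k%:E * Iv u v g.
  move=> -> k0 Dk; rewrite /Iv -ge0_integralZl_EFin //; last 2 first.
  - by move=> x _; rewrite lee_fin.
  - exact: (measurable_funS measurableT).
  by apply: eq_integral => x; rewrite inE => /Dk; rewrite /h => ->.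
by rewrite (E _ _ _ _ erefl _ DA) ?(E _ _ _ _ erefl _ DB) ?(E _ _ _ _ erefl _ DC) //; lra.
Qed.


Local Close Scope ereal_scope.


Lemma sqle (x c a : R) :
  (0 <= c - a /\ a + c <= 2 * x) \/ (c - a <= 0 /\ 2 * x <= a + c) -> (x - c) ^+ 2 <= (x - a) ^+ 2.
Proof.
move=> H; rewrite -subr_ge0.
have -> : (x - a) ^+ 2 - (x - c) ^+ 2 = (c - a) * (2 * x - a - c) by ring.
case: H => -[h1 h2]; first by apply: mulr_ge0; lra.
by apply: mulr_le0; lra.
Qed.

Ltac sq := apply: sqle; first [left; split; lra | right; split; lra].

Lemma J2_exact (g : R -> R) (c : R) : measurable_fun setT g -> (forall x, 0 <= g x) ->
  2/3 <= c <= 7/9 ->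
  (forall x, 2/3 <= x <= 7/9 -> Num.min ((x - c) ^+ 2) ((x - 5/6) ^+ 2) <= g x) ->
  exists F : R, (F%:E <= Iv (2/3) (7/9) g)%E /\ 1/8748 <= F /\ (F <= 1/8748 -> c = 13/18).
Proof.
move=> mg g0 /andP[c1 c2] H.
case: (lerP (13/18) c) => hc.
  exists (((7/9 - c) ^+ 3 - (2/3 - c) ^+ 3) / 3); split; [|split].
  - apply: lower_int; [exact: mg|lra|] => x /[dup] hx /andP[x1 x2]; apply: le_trans (H x hx).
    by rewrite min_l //; nra.
  - nra.
  - move=> hF; nra.
pose m := (c + 5/6) / 2.
exists (((m - c) ^+ 3 - (2/3 - c) ^+ 3) / 3 + ((7/9 - 5/6) ^+ 3 - (m - 5/6) ^+ 3) / 3).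
have hm1 : 2/3 <= m by rewrite /m; lra.
have hm2 : m <= 7/9 by rewrite /m; lra.
have key : ((m - c) ^+ 3 - (2/3 - c) ^+ 3) / 3 + ((7/9 - 5/6) ^+ 3 - (m - 5/6) ^+ 3) / 3
    = 1/8748 + (1/4) * ((13/18 - c) ^+ 2 * (1/3 - (13/18 - c))).
  by rewrite /m; field.
have P : 0 < (13/18 - c) ^+ 2 * (1/3 - (13/18 - c)).
  by apply: mulr_gt0; [apply: exprn_gt0; lra | lra].
split; [|split].
- rewrite /Iv (split_int _ _ _ _ mg g0 hm1 hm2) EFinD; apply: leeD.
  + apply: lower_int; [exact: mg|lra|] => x /andP[x1 x2]; have hx : 2/3 <= x <= 7/9 by apply/andP; split; lra.
    apply: le_trans (H x hx); rewrite min_l //; rewrite /m in x2; nra.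
  + apply: lower_int; [exact: mg|lra|] => x /andP[x1 x2]; have hx : 2/3 <= x <= 7/9 by apply/andP; split; lra.
    apply: le_trans (H x hx); rewrite min_r //; rewrite /m in x1; nra.
- by rewrite key; lra.
- by rewrite key; lra.
Qed.

Lemma J3_exact (g : R -> R) (c : R) : measurable_fun setT g -> (forall x, 0 <= g x) ->
  8/9 <= c <= 1 ->
  (forall x, 8/9 <= x <= 1 -> Num.min ((x - 5/6) ^+ 2) ((x - c) ^+ 2) <= g x) ->
  exists F : R, (F%:E <= Iv (8/9) 1 g)%E /\ 1/8748 <= F /\ (F <= 1/8748 -> c = 17/18).
Proof.
move=> mg g0 /andP[c1 c2] H.
case: (lerP c (17/18)) => hc.
  exists (((1 - c) ^+ 3 - (8/9 - c) ^+ 3) / 3); split; [|split].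
  - apply: lower_int; [exact: mg|lra|] => x /[dup] hx /andP[x1 x2]; apply: le_trans (H x hx).
    by rewrite min_r //; nra.
  - nra.
  - move=> hF; nra.
pose m := (c + 5/6) / 2.
exists (((m - 5/6) ^+ 3 - (8/9 - 5/6) ^+ 3) / 3 + ((1 - c) ^+ 3 - (m - c) ^+ 3) / 3).
have hm1 : 8/9 <= m by rewrite /m; lra.
have hm2 : m <= 1 by rewrite /m; lra.
have key : ((m - 5/6) ^+ 3 - (8/9 - 5/6) ^+ 3) / 3 + ((1 - c) ^+ 3 - (m - c) ^+ 3) / 3
    = 1/8748 + (1/4) * ((c - 17/18) ^+ 2 * (1/3 - (c - 17/18))).
  by rewrite /m; field.
have P : 0 < (c - 17/18) ^+ 2 * (1/3 - (c - 17/18)).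
  by apply: mulr_gt0; [apply: exprn_gt0; lra | lra].
split; [|split].
- rewrite /Iv (split_int _ _ _ _ mg g0 hm1 hm2) EFinD; apply: leeD.
  + apply: lower_int; [exact: mg|lra|] => x /andP[x1 x2]; have hx : 8/9 <= x <= 1 by apply/andP; split; lra.
    apply: le_trans (H x hx); rewrite min_l //; rewrite /m in x2; nra.
  + apply: lower_int; [exact: mg|lra|] => x /andP[x1 x2]; have hx : 8/9 <= x <= 1 by apply/andP; split; lra.
    apply: le_trans (H x hx); rewrite min_r //; rewrite /m in x1; nra.
- by rewrite key; lra.
- by rewrite key; lra.
Qed.

Lemma crude (g : R -> R) (U u v V c : R) : measurable_fun setT g -> (forall x, 0 <= g x) ->
  U <= u -> u <= v -> v <= V ->
  (forall x, u <= x <= v -> (x - c) ^+ 2 <= g x) ->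
  ((((v - c) ^+ 3 - (u - c) ^+ 3) / 3)%:E <= Iv U V g)%E.
Proof.
move=> mg g0 Uu uv vV H.
rewrite /Iv (split_int _ U u V mg g0 Uu) ?(le_trans uv vV) //.
rewrite (split_int _ u v V mg g0 uv vV).
apply: le_trans (lower_int _ _ _ _ mg uv H) _.
rewrite addeCA; apply: leeDl.
by apply: adde_ge0; apply: integral_ge0 => x _; rewrite lee_fin.
Qed.

Lemma J1_exact (g : R -> R) (c1 c2 : R) : measurable_fun setT g -> (forall x, 0 <= g x) ->
  0 <= c1 -> c1 <= c2 -> c2 <= 1/3 ->
  (forall x, 0 <= x <= 1/3 ->
     Num.min (Num.min ((x - c1) ^+ 2) ((x - c2) ^+ 2)) ((x - 1/2) ^+ 2) <= g x) ->
  exists F : R, (F%:E <= Iv 0 (1/3) g)%E /\ 1/1296 <= F /\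
     (F <= 1/1296 -> c1 = 1/12 /\ c2 = 1/4).
Proof.
move=> mg g0 h1 h12 h2 H.
case: (ltrP c2 (1/6)) => hc.
  exists (((1/3 - 1/6) ^+ 3 - (1/6 - 1/6) ^+ 3) / 3); split; [|split].
  - apply: crude => //; try lra; move=> x /andP[x1 x2].
    have hx : 0 <= x <= 1/3 by apply/andP; split; lra.
    apply: le_trans (H x hx); rewrite !le_min; apply/andP; split; [apply/andP; split|];
      sq.
  - have -> : ((1/3 - 1/6) ^+ 3 - (1/6 - 1/6) ^+ 3) / 3 = 1/648 :> R by field.
    lra.
  - have -> : ((1/3 - 1/6) ^+ 3 - (1/6 - 1/6) ^+ 3) / 3 = 1/648 :> R by field.
    move=> hF; lra.
pose m := (c1 + c2) / 2.
exists (((m - c1) ^+ 3 - (0 - c1) ^+ 3) / 3 + ((1/3 - c2) ^+ 3 - (m - c2) ^+ 3) / 3).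
have hm1 : 0 <= m by rewrite /m; lra.
have hm2 : m <= 1/3 by rewrite /m; lra.
pose a : R := 1/12.
pose x := c1; pose y := (c2 - c1) / 2; pose z := 1/3 - c2.
have key : ((m - c1) ^+ 3 - (0 - c1) ^+ 3) / 3 + ((1/3 - c2) ^+ 3 - (m - c2) ^+ 3) / 3
    = 1/1296 + ((x - a) ^+ 2 * (x + 2 * a) + 2 * ((y - a) ^+ 2 * (y + 2 * a)) + (z - a) ^+ 2 * (z + 2 * a)) / 3.
  by rewrite /m /x /y /z /a; field.
have Px : 0 <= (x - a) ^+ 2 * (x + 2 * a) by apply: mulr_ge0; [exact: sqr_ge0 | rewrite /x /a; lra].
have Py : 0 <= (y - a) ^+ 2 * (y + 2 * a) by apply: mulr_ge0; [exact: sqr_ge0 | rewrite /y /a; lra].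
have Pz : 0 <= (z - a) ^+ 2 * (z + 2 * a) by apply: mulr_ge0; [exact: sqr_ge0 | rewrite /z /a; lra].
split; [|split].
- rewrite /Iv (split_int _ _ _ _ mg g0 hm1 hm2) EFinD; apply: leeD.
  + apply: lower_int; [exact: mg|lra|] => t /andP[t1 t2]; have ht : 0 <= t <= 1/3 by apply/andP; split; lra.
    apply: le_trans (H t ht); rewrite !le_min; apply/andP; split; [apply/andP; split|]; rewrite /m in t2; nra.
  + apply: lower_int; [exact: mg|lra|] => t /andP[t1 t2]; have ht : 0 <= t <= 1/3 by apply/andP; split; lra.
    apply: le_trans (H t ht); rewrite !le_min; apply/andP; split; [apply/andP; split|]; rewrite /m in t1; nra.
- by rewrite key; lra.
- rewrite key => hF.
  have ex : (x - a) ^+ 2 * (x + 2 * a) = 0 by lra.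
  have ez : (z - a) ^+ 2 * (z + 2 * a) = 0 by lra.
  move/eqP: ex; rewrite mulf_eq0 sqrf_eq0 subr_eq0 => /orP[/eqP ex|]; last by rewrite /x /a; lra.
  move/eqP: ez; rewrite mulf_eq0 sqrf_eq0 subr_eq0 => /orP[/eqP ez|]; last by rewrite /z /a; lra.
  by move: ex ez; rewrite /x /z /a => ex ez; split; lra.
Qed.



Lemma m4_ge (x c a1 a2 a3 a4 : R) : (x - c) ^+ 2 <= (x - a1) ^+ 2 -> (x - c) ^+ 2 <= (x - a2) ^+ 2 ->
  (x - c) ^+ 2 <= (x - a3) ^+ 2 -> (x - c) ^+ 2 <= (x - a4) ^+ 2 -> (x - c) ^+ 2 <= m4 a1 a2 a3 a4 x.
Proof. by move=> h1 h2 h3 h4; rewrite /m4 !le_min h1 h2 h3 h4. Qed.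

Lemma m4_geM (x M a1 a2 a3 a4 : R) : M <= (x - a1) ^+ 2 -> M <= (x - a2) ^+ 2 ->
  M <= (x - a3) ^+ 2 -> M <= (x - a4) ^+ 2 -> M <= m4 a1 a2 a3 a4 x.
Proof. by move=> h1 h2 h3 h4; rewrite /m4 !le_min h1 h2 h3 h4. Qed.

Lemma m4_ge0 (a1 a2 a3 a4 x : R) : 0 <= m4 a1 a2 a3 a4 x.
Proof. by rewrite /m4 !le_min !sqr_ge0. Qed.

Lemma m4_meas (a1 a2 a3 a4 : R) : measurable_fun setT (m4 a1 a2 a3 a4).
Proof.
have mq (a : R) : measurable_fun setT (fun x : R => (x - a) ^+ 2).
  by apply: measurable_funX; apply: measurable_funB.
by apply: measurable_minr; [apply: measurable_minr; [apply: measurable_minr|]|].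
Qed.

Definition clamp (u v a : R) := if a < u then u else if v < a then v else a.

Lemma clamp_in (u v a : R) : u <= v -> u <= clamp u v a <= v.
Proof.
by rewrite /clamp => uv; case: (ltrP a u) => h1; case: (ltrP v a) => h2; apply/andP; split; lra.
Qed.

Lemma clamp_le (u v a x : R) : u <= x <= v -> (x - clamp u v a) ^+ 2 <= (x - a) ^+ 2.
Proof.
move=> /andP[h1 h2]; rewrite /clamp; case: (ltrP a u) => h3; first by sq.
by case: (ltrP v a) => h4; [sq|].
Qed.

Lemma clamp_mono (u v a b : R) : u <= v -> a <= b -> clamp u v a <= clamp u v b.
Proof.
rewrite /clamp => uv ab.
by case: (ltrP a u) => h1; case: (ltrP v a) => h2; case: (ltrP b u) => h3; case: (ltrP v b) => h4; lra.
Qed.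

Lemma clamp_inv (u v a t : R) : u < t < v -> clamp u v a = t -> a = t.
Proof.
by rewrite /clamp => /andP[h1 h2]; case: (ltrP a u) => h3; case: (ltrP v a) => h4; lra.
Qed.

Lemma comb (I1 I2 I3 : \bar R) (f1 f2 f3 : R) : (f1%:E <= I1)%E -> (f2%:E <= I2)%E -> (f3%:E <= I3)%E ->
  (((3/2) * f1 + (9/4) * f2 + (9/4) * f3)%:E <= (3/2)%:E * I1 + (9/4)%:E * I2 + (9/4)%:E * I3)%E.
Proof.
move=> h1 h2 h3; rewrite !EFinD !EFinM.
by apply: leeD; [apply: leeD|]; apply: lee_wpmul2l => //; rewrite lee_fin; lra.
Qed.

Section crude4.
Variables a1 a2 a3 a4 : R.
Local Notation g := (m4 a1 a2 a3 a4).

Lemma cJ1a : a1 < a2 -> a2 < a3 -> a3 < a4 -> 1/2 < a1 -> ((13/324 : R)%:E <= Iv 0 (1/3) g)%E.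
Proof.
  move=> h12 h23 h34 h; rewrite (_ : 13/324 = ((1/3 - 1/2) ^+ 3 - (0 - 1/2) ^+ 3) / 3 :> R); [|by field].
  apply: crude; [exact: m4_meas|exact: m4_ge0|lra|lra|lra|]; move=> x /andP[x1 x2]; apply: m4_ge; sq.
Qed.
Lemma cJ1b : a1 < a2 -> a2 < a3 -> a3 < a4 -> 1/6 <= a1 -> ((1/648 : R)%:E <= Iv 0 (1/3) g)%E.
Proof.
  move=> h12 h23 h34 h; rewrite (_ : 1/648 = ((1/6 - 1/6) ^+ 3 - (0 - 1/6) ^+ 3) / 3 :> R); [|by field].
  apply: crude; [exact: m4_meas|exact: m4_ge0|lra|lra|lra|]; move=> x /andP[x1 x2]; apply: m4_ge; sq.
Qed.
Lemma cJ1c : a1 < a2 -> a2 < a3 -> a3 < a4 -> a1 < 1/6 -> 1/2 < a2 -> ((1/648 : R)%:E <= Iv 0 (1/3) g)%E.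
Proof.
  move=> h12 h23 h34 h h'; rewrite (_ : 1/648 = ((1/3 - 1/6) ^+ 3 - (1/6 - 1/6) ^+ 3) / 3 :> R); [|by field].
  apply: crude; [exact: m4_meas|exact: m4_ge0|lra|lra|lra|]; move=> x /andP[x1 x2]; apply: m4_ge; sq.
Qed.
Lemma cJ2 : a1 < a2 -> a2 < a3 -> a3 < a4 -> (a1 <= 1/2 \/ 5/6 < a1) -> (a2 <= 1/2 \/ 5/6 < a2) -> (a3 <= 1/2 \/ 5/6 < a3) ->
    (a4 <= 1/2 \/ 5/6 < a4) -> ((13/8748 : R)%:E <= Iv (2/3) (7/9) g)%E.
Proof.
  move=> h12 h23 h34 k1 k2 k3 k4; rewrite (_ : 13/8748 = ((7/9 - 5/6) ^+ 3 - (2/3 - 5/6) ^+ 3) / 3 :> R); [|by field].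
  apply: crude; [exact: m4_meas|exact: m4_ge0|lra|lra|lra|]; move=> x /andP[x1 x2]; apply: m4_ge.
  by case: k1 => ?; sq. by case: k2 => ?; sq. by case: k3 => ?; sq. by case: k4 => ?; sq.
Qed.
Lemma cJ3 : a1 < a2 -> a2 < a3 -> a3 < a4 -> a4 <= 5/6 -> ((13/8748 : R)%:E <= Iv (8/9) 1 g)%E.
Proof.
  move=> h12 h23 h34 h; rewrite (_ : 13/8748 = ((1 - 5/6) ^+ 3 - (8/9 - 5/6) ^+ 3) / 3 :> R); [|by field].
  apply: crude; [exact: m4_meas|exact: m4_ge0|lra|lra|lra|]; move=> x /andP[x1 x2]; apply: m4_ge; sq.
Qed.
End crude4.

Lemma pt1 (a1 a2 a3 a4 x : R) : 0 <= x <= 1/3 -> 1/2 < a3 -> a3 < a4 ->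
  Num.min (Num.min ((x - clamp 0 (1/3) a1) ^+ 2) ((x - clamp 0 (1/3) a2) ^+ 2)) ((x - 1/2) ^+ 2)
   <= m4 a1 a2 a3 a4 x.
Proof.
move=> /[dup] hx /andP[x1 x2] h3 h4; apply: m4_geM.
- by apply: le_trans (clamp_le _ _ _ _ hx); rewrite !ge_min lexx.
- by apply: le_trans (clamp_le _ _ _ _ hx); rewrite !ge_min lexx orbT.
- by rewrite ge_min; apply/orP; right; sq.
- by rewrite ge_min; apply/orP; right; sq.
Qed.

Lemma pt2 (a1 a2 a3 a4 x : R) : 2/3 <= x <= 7/9 -> a1 < a2 -> a2 <= 1/2 -> 5/6 < a4 ->
  Num.min ((x - clamp (2/3) (7/9) a3) ^+ 2) ((x - 5/6) ^+ 2) <= m4 a1 a2 a3 a4 x.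
Proof.
move=> /[dup] hx /andP[x1 x2] h1 h2 h4; apply: m4_geM.
- rewrite ge_min; apply/orP; left; apply: le_trans (sqle x _ a1 _) => //.
  have /andP[u1 u2] : 2/3 <= clamp (2/3) (7/9) a3 <= 7/9 by apply: clamp_in; lra.
  by left; split; lra.
- rewrite ge_min; apply/orP; left; apply: le_trans (sqle x _ a2 _) => //.
  have /andP[u1 u2] : 2/3 <= clamp (2/3) (7/9) a3 <= 7/9 by apply: clamp_in; lra.
  by left; split; lra.
- by apply: le_trans (clamp_le _ _ _ _ hx); rewrite !ge_min lexx.
- by rewrite ge_min; apply/orP; right; sq.
Qed.

Lemma pt3 (a1 a2 a3 a4 x : R) : 8/9 <= x <= 1 -> a1 < a2 -> a2 < a3 -> a3 <= 5/6 ->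
  Num.min ((x - 5/6) ^+ 2) ((x - clamp (8/9) 1 a4) ^+ 2) <= m4 a1 a2 a3 a4 x.
Proof.
move=> /[dup] hx /andP[x1 x2] h1 h2 h3; apply: m4_geM.
- by rewrite ge_min; apply/orP; left; sq.
- by rewrite ge_min; apply/orP; left; sq.
- by rewrite ge_min; apply/orP; left; sq.
- by apply: le_trans (clamp_le _ _ _ _ hx); rewrite !ge_min lexx orbT.
Qed.

Lemma arith3 (F1 F2 F3 : R) : 1/1296 <= F1 -> 1/8748 <= F2 -> 1/8748 <= F3 ->
  13/7776 <= (3/2) * F1 + (9/4) * F2 + (9/4) * F3 /\
  ((3/2) * F1 + (9/4) * F2 + (9/4) * F3 <= 13/7776 -> [/\ F1 <= 1/1296, F2 <= 1/8748 & F3 <= 1/8748]).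
Proof. move=> h1 h2 h3; split => [|h]; [lra|split; lra]. Qed.

Definition Dsum (a1 a2 a3 a4 : R) : \bar R :=
  ((3/2)%:E * Iv 0 (1/3) (m4 a1 a2 a3 a4) + (9/4)%:E * Iv (2/3) (7/9) (m4 a1 a2 a3 a4)
    + (9/4)%:E * Iv (8/9) 1 (m4 a1 a2 a3 a4))%E.

Definition goodS (a1 a2 a3 a4 : R) (S : R) :=
  (S%:E <= Dsum a1 a2 a3 a4)%E /\ 13/7776 <= S /\
    (S <= 13/7776 -> [/\ a1 = 1/12, a2 = 1/4, a3 = 13/18 & a4 = 17/18]).

Lemma main_case (a1 a2 a3 a4 : R) : a1 < a2 -> a2 <= 1/2 -> 1/2 < a3 -> a3 <= 5/6 -> 5/6 < a4 ->
  exists S, goodS a1 a2 a3 a4 S.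
Proof.
move=> h12 h2 h3 h3' h4.
have k1 : (0:R) <= 1/3 by lra.
have k2 : (2/3:R) <= 7/9 by lra.
have k3 : (8/9:R) <= 1 by lra.
have i1 : 0 < (1/12 : R) < 1/3 by apply/andP; split; lra.
have i2 : 0 < (1/4 : R) < 1/3 by apply/andP; split; lra.
have i3 : 2/3 < (13/18 : R) < 7/9 by apply/andP; split; lra.
have i4 : 8/9 < (17/18 : R) < 1 by apply/andP; split; lra.
have h34 : a3 < a4 by lra.
have h23 : a2 < a3 by lra.
have h12' : a1 <= a2 by lra.
have h3'' : 1/2 < a4 by lra.
have [F1 [hF1 [bF1 eF1]]] := J1_exact _ _ _ (m4_meas a1 a2 a3 a4) (m4_ge0 a1 a2 a3 a4)
  (proj1 (andP (clamp_in _ _ a1 k1))) (clamp_mono _ _ _ _ k1 h12') (proj2 (andP (clamp_in _ _ a2 k1)))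
  (fun x hx => pt1 a1 a2 a3 a4 x hx h3 h34).
have [F2 [hF2 [bF2 eF2]]] := J2_exact _ _ (m4_meas a1 a2 a3 a4) (m4_ge0 a1 a2 a3 a4)
  (clamp_in _ _ a3 k2) (fun x hx => pt2 a1 a2 a3 a4 x hx h12 h2 h4).
have [F3 [hF3 [bF3 eF3]]] := J3_exact _ _ (m4_meas a1 a2 a3 a4) (m4_ge0 a1 a2 a3 a4)
  (clamp_in _ _ a4 k3) (fun x hx => pt3 a1 a2 a3 a4 x hx h12 h23 h3').
have [A1 A2] := arith3 _ _ _ bF1 bF2 bF3.
exists ((3/2) * F1 + (9/4) * F2 + (9/4) * F3); split; [exact: comb|split; first exact: A1].
move=> /A2 [/eF1 [e1 e2] /eF2 e3 /eF3 e4].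
split.
- exact: (clamp_inv _ _ _ _ i1 e1).
- exact: (clamp_inv _ _ _ _ i2 e2).
- exact: (clamp_inv _ _ _ _ i3 e3).
- exact: (clamp_inv _ _ _ _ i4 e4).
Qed.

Lemma I0 (a1 a2 a3 a4 u v : R) : (0%:E <= Iv u v (m4 a1 a2 a3 a4))%E.
Proof. by apply: integral_ge0 => x _; rewrite lee_fin; exact: m4_ge0. Qed.

Lemma main_lower (a1 a2 a3 a4 : R) : a1 < a2 -> a2 < a3 -> a3 < a4 ->
  exists S : R, goodS a1 a2 a3 a4 S.
Proof.
move=> h12 h23 h34.
case: (lerP a1 (1/2)) => h1; last first.
  exists ((3/2) * (13/324) + (9/4) * 0 + (9/4) * 0); split; [|split => [|hS]; [lra|clear -hS; lra]].
  by apply: comb; [exact: cJ1a | exact: I0 | exact: I0].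
case: (lerP a2 (1/2)) => h2; last first.
  exists ((3/2) * (1/648) + (9/4) * 0 + (9/4) * 0); split; [|split => [|hS]; [lra|clear -hS; lra]].
  apply: comb; [|exact: I0 | exact: I0].
  by case: (lerP (1/6) a1) => h; [exact: cJ1b| exact: cJ1c].
case: (lerP a3 (1/2)) => h3.
  case: (lerP a4 (5/6)) => h4.
    exists ((3/2) * 0 + (9/4) * 0 + (9/4) * (13/8748)); split; [|split => [|hS]; [lra|clear -hS; lra]].
    by apply: comb; [exact: I0 | exact: I0 | exact: cJ3].
  exists ((3/2) * 0 + (9/4) * (13/8748) + (9/4) * 0); split; [|split => [|hS]; [lra|clear -hS; lra]].
  by apply: comb; [exact: I0 | | exact: I0]; apply: cJ2 => //; [left|left|left|right]; lra.
case: (lerP a3 (5/6)) => h3'; last first.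
  exists ((3/2) * 0 + (9/4) * (13/8748) + (9/4) * 0); split; [|split => [|hS]; [lra|clear -hS; lra]].
  by apply: comb; [exact: I0 | | exact: I0]; apply: cJ2 => //; [left|left|right|right]; lra.
case: (lerP a4 (5/6)) => h4.
  exists ((3/2) * 0 + (9/4) * 0 + (9/4) * (13/8748)); split; [|split => [|hS]; [lra|clear -hS; lra]].
  by apply: comb; [exact: I0 | exact: I0 | exact: cJ3].
exact: main_case.
Qed.

Lemma upper_int (g : R -> R) (u v c : R) : measurable_fun setT g -> (forall x, 0 <= g x) -> u <= v ->
  (forall x, u <= x <= v -> g x <= (x - c) ^+ 2) ->
  (Iv u v g <= (((v - c) ^+ 3 - (u - c) ^+ 3) / 3)%:E)%E.
Proof.
move=> mg g0 uv H; rewrite /Iv -int_sq //.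
apply: ge0_le_integral => //.
- by move=> x _; rewrite lee_fin.
- by apply: (measurable_funS measurableT) => //; exact: measurableT_comp.
- apply: measurableT_comp => //; apply: measurable_funX; apply: measurable_funB => //.
Qed.

Lemma distE (a1 a2 a3 a4 : R) : distortion [fset a1; a2; a3; a4]%fset = Dsum a1 a2 a3 a4.
Proof.
rewrite /distortion; under eq_integral => x _ do rewrite mindist_m4.
rewrite /Dsum; apply: decomp; [exact: m4_meas | exact: m4_ge0].
Qed.

Lemma spec_upper : (Dsum (1/12) (1/4) (13/18) (17/18) <= (13/7776 : R)%:E)%E.
Proof.
pose g := m4 (1/12 : R) (1/4) (13/18) (17/18).
have mg : measurable_fun setT g by exact: m4_meas.
have g0 : forall x, 0 <= g x by move=> x; exact: m4_ge0.
have u1 : (Iv 0 (1/3) g <= (1/1296 : R)%:E)%E.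
  rewrite /Iv (split_int _ 0 (1/6) (1/3) mg g0); [|lra|lra].
  rewrite (_ : 1/1296 = ((1/6 - 1/12) ^+ 3 - (0 - 1/12) ^+ 3) / 3 + ((1/3 - 1/4) ^+ 3 - (1/6 - 1/4) ^+ 3) / 3 :> R); [|by field].
  rewrite EFinD; apply: leeD.
  - apply: upper_int; [exact: mg|exact: g0|lra|] => x _; by rewrite /g /m4 !ge_min lexx.
  - apply: upper_int; [exact: mg|exact: g0|lra|] => x _; by rewrite /g /m4 !ge_min lexx orbT.
have u2 : (Iv (2/3) (7/9) g <= (1/8748 : R)%:E)%E.
  rewrite (_ : 1/8748 = ((7/9 - 13/18) ^+ 3 - (2/3 - 13/18) ^+ 3) / 3 :> R); [|by field].
  apply: upper_int; [exact: mg|exact: g0|lra|] => x _; by rewrite /g /m4 !ge_min lexx !orbT.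
have u3 : (Iv (8/9) 1 g <= (1/8748 : R)%:E)%E.
  rewrite (_ : 1/8748 = ((1 - 17/18) ^+ 3 - (8/9 - 17/18) ^+ 3) / 3 :> R); [|by field].
  apply: upper_int; [exact: mg|exact: g0|lra|] => x _; by rewrite /g /m4 !ge_min lexx !orbT.
rewrite /Dsum -/g.
rewrite (_ : 13/7776 = (3/2) * (1/1296) + (9/4) * (1/8748) + (9/4) * (1/8748) :> R); [|by field].
rewrite !EFinD !EFinM.
by apply: leeD; [apply: leeD|]; apply: lee_wpmul2l => //; rewrite lee_fin; lra.
Qed.

End Main.

Arguments split_int {R}.
Arguments lower_int {R}.
Arguments int_sq {R}.
Arguments m4 {R}.
Arguments mindist_m4 {R}.

Arguments Iv {R}.

Arguments J1_exact {R}.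
Arguments J2_exact {R}.
Arguments J3_exact {R}.
Arguments crude {R}.
Arguments sqle {R}.


Arguments Dsum {R}.
Arguments goodS {R}.


Local Open Scope fset_scope.

Lemma card4 (R : realType) (a1 a2 a3 a4 : R) : (#|` [fset a1; a2; a3; a4]| <= 4)%N.
Proof.
rewrite !cardfsU !cardfs1.
lia.
Qed.

Theorem lemma5p6 (R : realType) (a1 a2 a3 a4 : R) :
  a1 < a2 -> a2 < a3 -> a3 < a4 ->
  optimal_set 4 [fset a1; a2; a3; a4] ->
  [/\ a1 = 1 / 12, a2 = 1 / 4, a3 = 13 / 18, a4 = 17 / 18
    & quant_err R 4 = (13 / 7776 : R)%:E].
Proof.
move=> h12 h23 h34 [_ hopt].
have Qle : (quant_err R 4 <= (13/7776 : R)%:E)%E.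
  apply: le_trans (spec_upper R).
  rewrite -distE; apply: ereal_inf_lbound; exists [fset (1/12 : R); 1/4; 13/18; 17/18] => //.
  exact: card4.
have [S [hS1 [hS2 hS3]]] := main_lower _ _ _ _ _ h12 h23 h34.
rewrite -distE hopt in hS1.
have hS : S <= 13/7776 by rewrite -lee_fin; exact: le_trans hS1 Qle.
have [e1 e2 e3 e4] := hS3 hS.
split => //.
apply/eqP; rewrite eq_le Qle /=.
by apply: le_trans hS1; rewrite lee_fin.
Qed.
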